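(* Assume the univalence axiom. Let $A\xrightarrow{i}E\xrightarrow{p}B$ be a short exact sequence of abelian groups, $G$ an abelian group, and $G\to F\to E$ a short exact sequence. Suppose given path data $i^*(F)=\mathrm{pt}$, i.e. an isomorphism $\psi: G\oplus A\cong i^*(F)$ between the middle groups respecting the inclusions of $G$ and the projections to $A$. Let $F/A$ denote the cokernel of the composite $A\to G\oplus A\xrightarrow{\psi} i^*(F)\to F$. Then the composite $G\to F\to F/A$ and the map $F/A\to B$ induced (by the universal property of the cokernel) from $F\to E\xrightarrow{p}B$ form a short exact sequence $G\to F/A\to B$.
   Context: Short exact sequence $X\xrightarrow{j}M\xrightarrow{q}Y$: $j$ injective, $q$ surjective, $q\circ j=0$, and $X\to\ker q$ surjective. For $g:Y'\to Y$, the pullback $g^*(M)$ is the short exact sequence $X\to M\times_Y Y'\to Y'$ with middle group $\{(m,y')\mid q(m)=g(y')\}$; in particular $i^*(F)$ is the sequence $G\to F\times_E A\to A$. The trivial sequence $\mathrm{pt}$ from $G$ to $A$ is $G\to G\oplus A\to A$. *)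

(* Defs.v *)
From HB Require Import structures.
From mathcomp Require Import all_boot all_order all_algebra.
Set Implicit Arguments. Unset Strict Implicit. Unset Printing Implicit Defensive.
Import GRing.Theory.
Local Open Scope ring_scope.

Definition ses (X M Y : zmodType) (j : {additive X -> M}) (q : {additive M -> Y}) : Prop :=
  [/\ injective j,
      (forall y : Y, exists m : M, q m = y),
      (forall x : X, q (j x) = 0)
    & (forall m : M, q m = 0 -> exists x : X, j x = m)].

(* The pullback i^*(F) of G -jF-> F -qF-> E along i : A -> E has middle group
   F x_E A = {(f,a) | qF f = i a}, viewed as a subgroup of F * A. *)
Definition in_pullback (A E F : zmodType) (qF : F -> E) (i : A -> E) (x : F * A) : Prop :=
  qF x.1 = i x.2.

(* Path data i^*(F) = pt: an additive psi : G (+) A -> F * A which is an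
   isomorphism onto the pullback subgroup F x_E A, respecting the inclusions
   of G (g |-> (g,0) resp. g |-> (jF g, 0)) and the projections to A. *)
Definition pullback_trivialization (G A E F : zmodType)
    (i : {additive A -> E}) (jF : {additive G -> F}) (qF : {additive F -> E})
    (psi : {additive (G * A)%type -> (F * A)%type}) : Prop :=
  [/\ (forall ga, in_pullback qF i (psi ga)),
      injective psi,
      (forall x, in_pullback qF i x -> exists ga, psi ga = x),
      (forall g : G, psi (g, 0) = (jF g, 0))
    & (forall ga, (psi ga).2 = ga.2)].

Definition is_cokernel (A F C : zmodType) (s : A -> F) (c : {additive F -> C}) : Prop :=
  (forall z : C, exists x : F, c x = z) /\
  (forall x : F, c x = 0 <-> exists a : A, s a = x).

(* Main.v *)
Require Import Defs.
From HB Require Import structures.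
From mathcomp Require Import all_boot all_order all_algebra.
Import GRing.Theory.
Local Open Scope ring_scope.

Theorem lemma14 (A E B G F C : zmodType)
    (i : {additive A -> E}) (p : {additive E -> B})
    (jF : {additive G -> F}) (qF : {additive F -> E})
    (psi : {additive (G * A)%type -> (F * A)%type})
    (c : {additive F -> C}) (r : {additive C -> B}) :
  ses i p ->
  ses jF qF ->
  pullback_trivialization i jF qF psi ->
  is_cokernel (fun a : A => (psi (0, a)).1) c ->
  (forall x : F, r (c x) = p (qF x)) ->
  exists (cj : {additive G -> C}),
    (forall g : G, cj g = c (jF g)) /\ ses cj r.
Proof.
move=> [iinj psurj _ pker] [jinj qsurj qj qker] [Hpb _ Hsurj Hg H2]
  [csurj cker] Hr.
exists (c \o jF)%FUN; split => //.
split.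
- have k0 : forall g, c (jF g) = 0 -> g = 0.
    move=> g /cker [a Ha].
    have Hp := Hpb (0, a); rewrite /in_pullback H2 /= Ha qj in Hp.
    have a0 : a = 0 by apply: iinj; rewrite raddf0.
    subst a; apply: jinj; rewrite raddf0 -Ha.
    have -> : ((0 : G), (0 : A)) = 0 by [].
    by rewrite raddf0.
  move=> x y /= Hxy; apply/eqP; rewrite -subr_eq0; apply/eqP; apply: k0.
  by rewrite !raddfB /= Hxy subrr.
- move=> b; have [e <-] := psurj b; have [f <-] := qsurj e.
  by exists (c f); rewrite Hr.
- by move=> g /=; rewrite Hr qj raddf0.
- move=> z Hz; have [f Hf] := csurj z; subst z.
  rewrite Hr in Hz.
  have [a Ha] := pker _ Hz.
  have [[g a'] Hga] := Hsurj (f, a) (esym Ha).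
  have Ea : a' = a by have := H2 (g, a'); rewrite Hga.
  subst a'.
  have Hs : (g, a) = (g, 0) + (0, a) by apply/eqP; rewrite eqE /= (_ : g + 0 = g) ?addr0 // (_ : 0 + a = a) ?add0r // !eqxx.
  rewrite Hs raddfD Hg in Hga.
  have Hf1 : f = jF g + (psi (0, a)).1 by have := congr1 fst Hga; move=> /= <-.
  exists g => /=; rewrite Hf1 raddfD /=.
  have -> : c (psi (0, a)).1 = 0 by apply/cker; exists a.
  by rewrite addr0.
Qed.
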